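(* Let $T$ be an LMSR tree with liquidity parameter $b>0$, let $\alpha\in\Omega$, and let $I=[\alpha,1)$. Consider the following procedure (Algorithm 1). Initialize $z\gets\mathit{root}$, $P\gets 1$, $\mathit{price}\gets 0$. While $\alpha_z\neq\alpha$ and $z$ is not a leaf: set $P\gets P\,e^{s_z/b}$; if $\alpha<\alpha_{\mathrm{right}(z)}$ then set $\mathit{price}\gets\mathit{price}+P\,S_{\mathrm{right}(z)}/S_{\mathit{root}}$ and $z\gets\mathrm{left}(z)$, otherwise set $z\gets\mathrm{right}(z)$. After the loop, return $$\mathit{price}+\frac{\beta_z-\alpha}{\beta_z-\alpha_z}\cdot \frac{P\,S_z}{S_{\mathit{root}}}.$$ Then the procedure returns exactly the LMSR price $p_{I\cap\Omega}(\boldsymbol\theta(T))$ of the bundle security for $I$ in the market state $\boldsymbol\theta(T)$ represented by $T$, and it runs in time $\mathcal O(\log n_{\mathit{vals}})$ (counting arithmetic operations, including exponentials, as unit cost), where $n_{\mathit{vals}}=|\{\alpha_z: z\in T\}|$ is the number of distinct left endpoints of node intervals of $T$.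
   Context: Fix an integer $K\ge 1$, $N=2^K$, and the outcome set $\Omega=\{j/N: j=0,1,\dots,N-1\}$. Fix a liquidity parameter $b>0$. For a state $\boldsymbol\theta\in\mathbb R^{\Omega}$ and an event $E\subseteq\Omega$, the LMSR price of the bundle security for $E$ is $p_E(\boldsymbol\theta)=\sum_{\omega\in E}e^{\theta_\omega/b}\big/\sum_{\nu\in\Omega}e^{\theta_\nu/b}$. An interval $[\alpha,\beta)$ is identified with the event $[\alpha,\beta)\cap\Omega$. An LMSR tree is a full binary tree (every node $z$ is either a leaf or has exactly two children $\mathrm{left}(z)$, $\mathrm{right}(z)$) in which each node $z$ carries an interval $I_z=[\alpha_z,\beta_z)$ with $\alpha_z,\beta_z\in\Omega\cup\{1\}$, a height $h_z\ge 0$, a real number $s_z$ (shares held at $z$), and a number $S_z\ge 0$ (partial normalization constant), such that: (i) binary-search property: $I_{\mathit{root}}=[0,1)$ and for every inner node $z$, $\alpha_z=\alpha_{\mathrm{left}(z)}<\beta_{\mathrm{left}(z)}=\alpha_{\mathrm{right}(z)}<\beta_{\mathrm{right}(z)}=\beta_z$; (ii) height balance: $h_z=0$ for leaves and, for inner $z$, $h_z=1+\max\{h_{\mathrm{left}(z)},h_{\mathrm{right}(z)}\}$ and $|h_{\mathrm{left}(z)}-h_{\mathrm{right}(z)}|\le 1$; (iii) partial-normalization correctness: $S_z=e^{s_z/b}(\beta_z-\alpha_z)$ for leaves and $S_z=e^{s_z/b}(S_{\mathrm{left}(z)}+S_{\mathrm{right}(z)})$ for inner nodes. The market state represented by $T$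 is $\boldsymbol\theta(T)\in\mathbb R^\Omega$ with $\theta_\omega(T)=\sum_{z\in T:\ \omega\in I_z}s_z$. *)

(* Defs.v *)
From Stdlib Require Import Reals Lra Lia Arith List.
Open Scope R_scope.

(* Interval endpoints are represented by natural numbers j <= N, standing for
   the real number j/N in Omega ∪ {1}.  Outcome omega = j/N for j < N. *)

(* A node: left endpoint index, right endpoint index, height h_z, shares s_z,
   partial normalization constant S_z (and children for inner nodes). *)
Inductive ltree : Type :=
| LLeaf : nat -> nat -> nat -> R -> R -> ltree
| LNode : nat -> nat -> nat -> R -> R -> ltree -> ltree -> ltree.

Definition alpha_ (z : ltree) : nat :=
  match z with LLeaf a _ _ _ _ | LNode a _ _ _ _ _ _ => a end.
Definition beta_ (z : ltree) : nat :=
  match z with LLeaf _ c _ _ _ | LNode _ c _ _ _ _ _ => c end.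
Definition height_ (z : ltree) : nat :=
  match z with LLeaf _ _ h _ _ | LNode _ _ h _ _ _ _ => h end.
Definition shares_ (z : ltree) : R :=
  match z with LLeaf _ _ _ s _ | LNode _ _ _ s _ _ _ => s end.
Definition snorm_ (z : ltree) : R :=
  match z with LLeaf _ _ _ _ Sz | LNode _ _ _ _ Sz _ _ => Sz end.

Definition pt (N j : nat) : R := INR j / INR N.

Fixpoint wf_node (N : nat) (b : R) (z : ltree) : Prop :=
  match z with
  | LLeaf a c h s Sz =>
      (a <= N)%nat /\ (c <= N)%nat /\ h = 0%nat /\
      Sz = exp (s / b) * (pt N c - pt N a)
  | LNode a c h s Sz l r =>
      (a <= N)%nat /\ (c <= N)%nat /\
      a = alpha_ l /\ (alpha_ l < beta_ l)%nat /\ beta_ l = alpha_ r /\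
      (alpha_ r < beta_ r)%nat /\ beta_ r = c /\
      h = S (Nat.max (height_ l) (height_ r)) /\
      (height_ l <= height_ r + 1)%nat /\ (height_ r <= height_ l + 1)%nat /\
      Sz = exp (s / b) * (snorm_ l + snorm_ r) /\
      wf_node N b l /\ wf_node N b r
  end.

Definition is_lmsr_tree (K : nat) (b : R) (T : ltree) : Prop :=
  alpha_ T = 0%nat /\ beta_ T = (2 ^ K)%nat /\ wf_node (2 ^ K) b T.

Fixpoint theta (T : ltree) (j : nat) : R :=
  match T with
  | LLeaf a c _ s _ =>
      if (Nat.leb a j && Nat.ltb j c)%bool then s else 0
  | LNode a c _ s _ l r =>
      (if (Nat.leb a j && Nat.ltb j c)%bool then s else 0) + theta l j + theta r j
  end.

Definition sumR (n : nat) (f : nat -> R) : R :=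
  fold_right Rplus 0 (map f (seq 0 n)).

(* LMSR price of the bundle for the event E ⊆ Omega (E given as a predicate
   on indices j < N), in state th *)
Definition lmsr_price (N : nat) (b : R) (th : nat -> R) (E : nat -> bool) : R :=
  sumR N (fun j => if E j then exp (th j / b) else 0) /
  sumR N (fun j => exp (th j / b)).

Definition ray_event (a : nat) : nat -> bool := fun j => Nat.leb a j.

(* Algorithm 1.  Returns (result, number of loop iterations + 1); the cost
   counts each loop iteration (a constant number of arithmetic operations,
   including one exponential) and the final step as one unit each. *)
Fixpoint algo1_loop (N : nat) (b : R) (a : nat) (Sroot : R)
    (z : ltree) (P price : R) : R * nat :=
  let final := (price + ((pt N (beta_ z) - pt N a) / (pt N (beta_ z) - pt N (alpha_ z)))
                        * (P * snorm_ z / Sroot), 1%nat) in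
  if Nat.eqb (alpha_ z) a then final else
  match z with
  | LLeaf _ _ _ _ _ => final
  | LNode _ _ _ s _ l r =>
      let P' := P * exp (s / b) in
      if Nat.ltb a (alpha_ r) then
        let res := algo1_loop N b a Sroot l P' (price + P' * snorm_ r / Sroot) in
        (fst res, S (snd res))
      else
        let res := algo1_loop N b a Sroot r P' price in
        (fst res, S (snd res))
  end.

Definition algo1 (K : nat) (b : R) (T : ltree) (a : nat) : R * nat :=
  algo1_loop (2 ^ K) b a (snorm_ T) T 1 0.

Fixpoint nodes (T : ltree) : list ltree :=
  match T with
  | LLeaf _ _ _ _ _ => T :: nil
  | LNode _ _ _ _ _ l r => T :: nodes l ++ nodes r
  end.

Definition n_vals (T : ltree) : nat :=
  length (nodup Nat.eq_dec (map alpha_ (nodes T))).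

(* Main.v *)
Require Import Defs.
From Stdlib Require Import Reals Lra Lia Arith List.
Open Scope R_scope.

Definition sumRange (f : nat -> R) (m n : nat) : R := fold_right Rplus 0 (map f (seq m n)).

Lemma fold_acc (l : list R) x : fold_right Rplus x l = fold_right Rplus 0 l + x.
Proof. induction l; simpl; [lra|rewrite IHl; lra]. Qed.

Lemma sumRange_split f m n1 n2 :
  sumRange f m (n1 + n2) = sumRange f m n1 + sumRange f (m + n1) n2.
Proof. unfold sumRange. rewrite seq_app, map_app, fold_right_app, fold_acc. reflexivity. Qed.

Lemma sumRange_ext f g m n :
  (forall j, (m <= j < m + n)%nat -> f j = g j) -> sumRange f m n = sumRange g m n.
Proof.
  revert m; induction n; intros m H; unfold sumRange in *; simpl; [reflexivity|].
  rewrite (H m) by lia. f_equal. apply IHn. intros; apply H; lia.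
Qed.

Lemma sumRange_scale c f m n :
  sumRange (fun j => c * f j) m n = c * sumRange f m n.
Proof.
  revert m; induction n; intros m; unfold sumRange in *; simpl; [ring|].
  rewrite IHn. ring.
Qed.

Lemma sumRange_const c m n : sumRange (fun _ => c) m n = INR n * c.
Proof.
  revert m; induction n; intros m; unfold sumRange in *; simpl; [ring|].
  rewrite IHn. destruct n; simpl; ring.
Qed.

Lemma sumRange_pos f m n : (forall j, 0 < f j) -> (0 < n)%nat -> 0 < sumRange f m n.
Proof.
  intros Hf. revert m; induction n; intros m Hn; [lia|]. unfold sumRange in *; simpl.
  destruct n.
  - simpl. specialize (Hf m). lra.
  - specialize (IHn (S m) ltac:(lia)). specialize (Hf m). lra.
Qed.

Lemma theta_out N b z j : wf_node N b z -> (j < alpha_ z \/ beta_ z <= j)%nat -> theta z j = 0.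
Proof.
  induction z; simpl; intros Hw Hj.
  - destruct (Nat.leb n j) eqn:E1; destruct (Nat.ltb j n0) eqn:E2; simpl; try reflexivity.
    apply Nat.leb_le in E1; apply Nat.ltb_lt in E2; lia.
  - destruct Hw as (Ha & Hc & Hal & Hlb & Hbr & Hrb & Hrc & Hh & Hh1 & Hh2 & HS & Hwl & Hwr).
    rewrite IHz1, IHz2 by (auto; lia).
    destruct (Nat.leb n j) eqn:E1; destruct (Nat.ltb j n0) eqn:E2; simpl; try ring.
    apply Nat.leb_le in E1; apply Nat.ltb_lt in E2; lia.
Qed.

Lemma in_if a c j (s : R) : (a <= j < c)%nat -> (if (Nat.leb a j && Nat.ltb j c)%bool then s else 0) = s.
Proof. intros H. rewrite (proj2 (Nat.leb_le a j)), (proj2 (Nat.ltb_lt j c)) by lia. reflexivity. Qed.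

Definition Q (b : R) (z : ltree) (u : nat) : R :=
  sumRange (fun j => exp (theta z j / b)) u (beta_ z - u).

Lemma Q_node_l N b a c h s Sz l r u :
  wf_node N b (LNode a c h s Sz l r) -> (a <= u <= beta_ l)%nat ->
  Q b (LNode a c h s Sz l r) u = exp (s / b) * (Q b l u + Q b r (alpha_ r)).
Proof.
  intros Hw Hu. pose proof Hw as Hw'. simpl in Hw.
  destruct Hw as (Ha & Hc & Hal & Hlb & Hbr & Hrb & Hrc & Hh & Hh1 & Hh2 & HS & Hwl & Hwr).
  unfold Q. simpl beta_.
  replace (c - u)%nat with ((beta_ l - u) + (beta_ r - alpha_ r))%nat by lia.
  rewrite sumRange_split. replace (u + (beta_ l - u))%nat with (alpha_ r) by lia.
  rewrite Rmult_plus_distr_l, <- !sumRange_scale. f_equal; apply sumRange_ext; intros j Hj; simpl theta.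
  - rewrite in_if by lia. rewrite (theta_out N b r j) by (auto; lia).
    rewrite Rplus_0_r, Rdiv_plus_distr, exp_plus. reflexivity.
  - rewrite in_if by lia. rewrite (theta_out N b l j) by (auto; lia).
    rewrite Rplus_0_r, Rdiv_plus_distr, exp_plus. reflexivity.
Qed.

Lemma Q_node_r N b a c h s Sz l r u :
  wf_node N b (LNode a c h s Sz l r) -> (alpha_ r <= u <= c)%nat ->
  Q b (LNode a c h s Sz l r) u = exp (s / b) * Q b r u.
Proof.
  intros Hw Hu. simpl in Hw.
  destruct Hw as (Ha & Hc & Hal & Hlb & Hbr & Hrb & Hrc & Hh & Hh1 & Hh2 & HS & Hwl & Hwr).
  unfold Q. simpl beta_. rewrite Hrc.
  rewrite <- !sumRange_scale. apply sumRange_ext; intros j Hj; simpl theta.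
  rewrite in_if by lia. rewrite (theta_out N b l j) by (auto; lia).
  rewrite Rplus_0_r, Rdiv_plus_distr, exp_plus. reflexivity.
Qed.

Lemma full_sum N b z : (0 < N)%nat -> wf_node N b z -> (alpha_ z < beta_ z)%nat ->
  snorm_ z * INR N = Q b z (alpha_ z).
Proof.
  intros HN. induction z; intros Hw Hab.
  - simpl in Hw, Hab |- *. destruct Hw as (Ha & Hc & Hh & HS).
    unfold Q. simpl beta_. rewrite HS.
    rewrite (sumRange_ext _ (fun _ => exp (r / b))).
    + rewrite sumRange_const, minus_INR by lia. unfold pt.
      assert (INR N <> 0) by (apply not_0_INR; lia). field. auto.
    + intros j Hj. simpl. rewrite in_if by lia. reflexivity.
  - pose proof Hw as Hw0. simpl in Hw.
    destruct Hw as (Ha & Hc & Hal & Hlb & Hbr & Hrb & Hrc & Hh & Hh1 & Hh2 & HS & Hwl & Hwr).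
    simpl alpha_. rewrite (Q_node_l N) by (auto; lia). simpl snorm_. rewrite HS.
    rewrite Rmult_assoc, Rmult_plus_distr_r, IHz1, IHz2 by auto. subst n. reflexivity.
Qed.

Lemma loop_eq N b a Sroot z P price : alpha_ z = a ->
  algo1_loop N b a Sroot z P price =
  (price + ((pt N (beta_ z) - pt N a) / (pt N (beta_ z) - pt N (alpha_ z)))
                        * (P * snorm_ z / Sroot), 1%nat).
Proof. intros H; subst a; destruct z; simpl; rewrite Nat.eqb_refl; reflexivity. Qed.

Lemma loop_ok N b a Sroot z : (0 < N)%nat -> Sroot <> 0 -> wf_node N b z ->
  (alpha_ z <= a < beta_ z)%nat -> forall P price,
  fst (algo1_loop N b a Sroot z P price) = price + P * Q b z a / (INR N * Sroot).
Proof.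
  intros HN HS0. assert (HN' : INR N <> 0) by (apply not_0_INR; lia).
  assert (Hfin : forall z P price, wf_node N b z -> alpha_ z = a -> (a < beta_ z)%nat ->
     price + (pt N (beta_ z) - pt N a) / (pt N (beta_ z) - pt N (alpha_ z)) * (P * snorm_ z / Sroot)
     = price + P * Q b z a / (INR N * Sroot)).
  { clear z. intros z P price Hw Hz1 Hz2.
    pose proof (full_sum N b z HN Hw ltac:(lia)) as Hf. rewrite Hz1 in *.
    assert (pt N (beta_ z) - pt N a <> 0).
    { unfold pt. assert (INR a < INR (beta_ z)) by (apply lt_INR; lia).
      intro H0. field_simplify_eq in H0; auto. lra. }
    rewrite <- Hf. field. auto. }
  induction z; intros Hw Hz P price.
  - destruct (Nat.eq_dec n a) as [E|E];
     [rewrite loop_eq by exact E; cbn [fst]; apply Hfin; auto; simpl in *; lia|].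
    simpl algo1_loop. rewrite (proj2 (Nat.eqb_neq _ _) E). simpl fst.
    simpl in Hw, Hz |- *. destruct Hw as (Ha & Hc & Hh & HS). unfold Q. simpl beta_.
      rewrite (sumRange_ext _ (fun _ => exp (r / b))).
      + rewrite sumRange_const, minus_INR by lia. unfold pt. rewrite HS. unfold pt.
        assert (INR n0 - INR n <> 0).
        { assert (INR n < INR n0) by (apply lt_INR; lia). lra. }
        field. repeat split; auto.
      + intros j Hj. simpl. rewrite in_if by lia. reflexivity.
  - pose proof Hw as Hw0.
    destruct (Nat.eq_dec n a) as [E|E];
     [rewrite loop_eq by exact E; cbn [fst]; apply Hfin; auto; simpl in *; lia|].
    simpl algo1_loop. rewrite (proj2 (Nat.eqb_neq _ _) E).
    simpl in Hw, Hz.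
    destruct Hw as (Ha & Hc & Hal & Hlb & Hbr & Hrb & Hrc & Hh & Hh1 & Hh2 & HS & Hwl & Hwr).
    destruct (Nat.ltb a (alpha_ z2)) eqn:E2.
    + apply Nat.ltb_lt in E2. simpl fst. rewrite IHz1 by (auto; lia).
      rewrite (Q_node_l N) by (auto; lia). pose proof (full_sum N b z2 HN Hwr Hrb) as Hf2. rewrite <- Hf2. field. auto.
    + apply Nat.ltb_ge in E2. simpl fst. rewrite IHz2 by (auto; lia).
      rewrite (Q_node_r N) by (auto; lia). field. auto.
Qed.

Lemma loop_cost N b a Sroot z : wf_node N b z -> forall P price,
  (snd (algo1_loop N b a Sroot z P price) <= height_ z + 1)%nat.
Proof.
  induction z; intros Hw P price.
  - simpl in Hw. destruct Hw as (Ha & Hc & Hh & HS). simpl.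
    destruct (n =? a)%nat; simpl; lia.
  - simpl in Hw.
    destruct Hw as (Ha & Hc & Hal & Hlb & Hbr & Hrb & Hrc & Hh & Hh1 & Hh2 & HS & Hwl & Hwr).
    simpl. destruct (n =? a)%nat; [simpl; lia|].
    destruct (a <? alpha_ z2)%nat; simpl.
    + specialize (IHz1 Hwl (P * exp (r / b)) (price + P * exp (r / b) * snorm_ z2 / Sroot)). lia.
    + specialize (IHz2 Hwr (P * exp (r / b)) price). lia.
Qed.

Fixpoint lalph (z : ltree) : list nat :=
  match z with
  | LLeaf a _ _ _ _ => a :: nil
  | LNode _ _ _ _ _ l r => lalph l ++ lalph r
  end.

Lemma lalph_incl z x : In x (lalph z) -> In x (map alpha_ (nodes z)).
Proof.
  induction z; simpl; intros H.
  - exact H.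
  - right. rewrite map_app. apply in_or_app. apply in_app_or in H. tauto.
Qed.

Lemma lalph_range N b z x : wf_node N b z -> (alpha_ z < beta_ z)%nat -> In x (lalph z) ->
  (alpha_ z <= x < beta_ z)%nat.
Proof.
  induction z; simpl; intros Hw Hab H.
  - destruct H as [H|[]]. lia.
  - destruct Hw as (Ha & Hc & Hal & Hlb & Hbr & Hrb & Hrc & Hh & Hh1 & Hh2 & HS & Hwl & Hwr).
    apply in_app_or in H. destruct H as [H|H].
    + specialize (IHz1 Hwl Hlb H). lia.
    + specialize (IHz2 Hwr Hrb H). lia.
Qed.

Lemma lalph_nodup N b z : wf_node N b z -> (alpha_ z < beta_ z)%nat -> NoDup (lalph z).
Proof.
  induction z; simpl; intros Hw Hab.
  - constructor; [simpl; tauto|constructor].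
  - destruct Hw as (Ha & Hc & Hal & Hlb & Hbr & Hrb & Hrc & Hh & Hh1 & Hh2 & HS & Hwl & Hwr).
    apply NoDup_app; auto. intros x H1 H2.
    pose proof (lalph_range N b z1 x Hwl Hlb H1). pose proof (lalph_range N b z2 x Hwr Hrb H2). lia.
Qed.

Lemma lalph_len N b z : wf_node N b z -> forall k, (2 * k <= height_ z)%nat ->
  (2 ^ k <= length (lalph z))%nat.
Proof.
  induction z; simpl; intros Hw k Hk.
  - destruct Hw as (Ha & Hc & Hh & HS). subst. replace k with 0%nat by lia. simpl. lia.
  - destruct Hw as (Ha & Hc & Hal & Hlb & Hbr & Hrb & Hrc & Hh & Hh1 & Hh2 & HS & Hwl & Hwr).
    rewrite length_app. destruct k.
    + specialize (IHz1 Hwl 0%nat ltac:(lia)). simpl in *. lia.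
    + specialize (IHz1 Hwl k ltac:(lia)). specialize (IHz2 Hwr k ltac:(lia)).
      rewrite Nat.pow_succ_r'. lia.
Qed.

Theorem theorem1 :
  exists c : nat,
    forall (K : nat) (b : R) (T : ltree) (a : nat),
      (1 <= K)%nat -> 0 < b -> is_lmsr_tree K b T -> (a < 2 ^ K)%nat ->
      fst (algo1 K b T a) = lmsr_price (2 ^ K) b (theta T) (ray_event a) /\
      (snd (algo1 K b T a) <= c * (Nat.log2 (n_vals T) + 1))%nat.
Proof.
  exists 2%nat. intros K b T a HK Hb HT Ha.
  destruct HT as (H0 & HN & Hw).
  set (N := (2 ^ K)%nat) in *.
  assert (HNpos : (0 < N)%nat) by (unfold N; apply Nat.neq_0_lt_0, Nat.pow_nonzero; lia).
  split.
  - pose proof (full_sum N b T HNpos Hw ltac:(lia)) as Hf. rewrite H0 in Hf.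
    assert (HQ0 : 0 < Q b T 0).
    { unfold Q. apply sumRange_pos; [intros; apply exp_pos|lia]. }
    assert (HNr : INR N <> 0) by (apply not_0_INR; lia).
    assert (HS : snorm_ T <> 0).
    { intro E. rewrite E in Hf. lra. }
    unfold algo1. fold N. rewrite (loop_ok N b a (snorm_ T) T HNpos HS Hw) by lia.
    unfold lmsr_price.
    assert (E1 : sumR N (fun j => exp (theta T j / b)) = Q b T 0).
    { unfold Q, sumR. rewrite HN, Nat.sub_0_r. reflexivity. }
    assert (E2 : sumR N (fun j => if ray_event a j then exp (theta T j / b) else 0) = Q b T a).
    { unfold Q, sumR. rewrite HN. fold (sumRange (fun j => if ray_event a j then exp (theta T j / b) else 0) 0 N).
      replace N with (a + (N - a))%nat at 1 by lia. rewrite sumRange_split.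
      rewrite (sumRange_ext _ (fun _ => 0)).
      - rewrite sumRange_const, Rmult_0_r, Rplus_0_l. simpl. apply sumRange_ext.
        intros j Hj. unfold ray_event. rewrite (proj2 (Nat.leb_le a j)) by lia. reflexivity.
      - intros j Hj. unfold ray_event. rewrite (proj2 (Nat.leb_gt a j)) by lia. reflexivity. }
    rewrite E1, E2, <- Hf. field. auto.
  - unfold algo1. fold N. pose proof (loop_cost N b a (snorm_ T) T Hw 1 0) as Hc.
    assert (HL : (length (lalph T) <= n_vals T)%nat).
    { unfold n_vals. apply NoDup_incl_length.
      - apply (lalph_nodup N b T Hw). lia.
      - intros x Hx. apply nodup_In. apply lalph_incl. exact Hx. }
    pose proof (lalph_len N b T Hw 0 ltac:(lia)) as H1. simpl in H1.
    pose proof (Nat.log2_spec (n_vals T) ltac:(lia)) as Hs.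
    destruct (Nat.le_gt_cases (2 * S (Nat.log2 (n_vals T))) (height_ T)) as [Hg|Hg].
    + pose proof (lalph_len N b T Hw _ Hg). lia.
    + lia.
Qed.
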